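(* Let $s_0,\dots,s_m\in\Sigma^n$ be strings such that $s_{i+1}=ICR(s_i)$ for all $0\le i<m$. Then \[P(H(s_0)) - P(H(s_m)) \equiv \sum_{i=0}^{m-1} e_{s_i[0]} \mod K.\]
   Context: Let $k\ge 1$ be an integer, $\Sigma=\{0,1,\dots,k-1\}$ with arithmetic on symbols taken modulo $k$, and $n\ge 1$. For $s\in\Sigma^n$ write $s=s[0]s[1]\cdots s[n-1]$. The histogram of a string $s$ is $H(s):\Sigma\to\mathbb{Z}$, $H(s)(c)=$ number of occurrences of $c$ in $s$. For $b\in\Sigma$, $e_b:\Sigma\to\mathbb{Z}$ is the indicator function of $b$. $K:\Sigma\to\mathbb{Z}$ is the constant function $1$. For $H:\Sigma\to\mathbb{Z}$, its partial sum is $P(H):\Sigma\to\mathbb{Z}$, $P(H)(i)=\sum_{j=0}^{i}H(j)$. For $F,G:\Sigma\to\mathbb{Z}$, $F\equiv G \mod K$ means $F-G$ is an integer multiple of $K$. The incremented cycle register rule is $ICR(s)=s[1]s[2]\cdots s[n-1](s[0]+1)$. *)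

(* Defs.v *)
From mathcomp Require Import all_boot all_order all_algebra.
Set Implicit Arguments. Unset Strict Implicit. Unset Printing Implicit Defensive.
Import GRing.Theory Num.Theory.
Local Open Scope ring_scope.

(* Alphabet Sigma = 'I_k = {0,...,k-1}; the successor mod k is ordS. *)
(* Strings are sequences over 'I_k (their length is constrained separately). *)

Definition hist k (s : seq 'I_k) : 'I_k -> int := fun c => (count_mem c s)%:Z.

Definition indic k (b : 'I_k) : 'I_k -> int := fun c => (c == b)%:Z.

Definition psum k (F : 'I_k -> int) : 'I_k -> int :=
  fun i => \sum_(j < k | (j <= i)%N) F j.

(* F == G mod K : F - G is an integer multiple of the constant function 1. *)
Definition eqmodK k (F G : 'I_k -> int) : Prop :=
  exists z : int, forall c, F c - G c = z.

Definition ICR k (s : seq 'I_k) : seq 'I_k :=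
  match s with
  | x :: t => rcons t (ordS x)
  | [::] => [::]
  end.

Definition indic_first k (s : seq 'I_k) : 'I_k -> int :=
  match s with
  | x :: _ => indic x
  | [::] => fun _ => 0
  end.

(* Main.v *)
Require Import Defs.
From mathcomp Require Import all_boot all_order all_algebra.
From mathcomp Require Import zify ring.
Import GRing.Theory Num.Theory.
Local Open Scope ring_scope.

Lemma sum_ind k (x c : 'I_k) :
  \sum_(j < k | (j <= c)%N) ((x == j)%:Z : int) = ((x <= c)%N)%:Z.
Proof.
rewrite big_mkcond /=.
rewrite (eq_bigr (fun j => if j == x then ((x <= c)%N)%:Z else 0)).
  by rewrite -big_mkcond big_pred1_eq.
move=> j _; case: (eqVneq j x) => [->|ne]; by case: ifP.
Qed.

Lemma step k (t : seq 'I_k) : exists z : int, forall c,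
  psum (hist t) c - psum (hist (ICR t)) c - indic_first t c = z.
Proof.
case: t => [|x u] /=.
  exists 0 => c; rewrite /psum /hist /= big1 ?subrr //.
exists (if x.+1 == k then -1 else 0) => c.
rewrite /psum -sumrB.
rewrite (eq_bigr (fun j => ((x == j)%:Z - (ordS x == j)%:Z))); last first.
  move=> j _; rewrite /hist /= -cats1 count_cat /=.
  rewrite PoszD PoszD; lia.
rewrite sumrB !sum_ind /indic.
have hc := ltn_ord c; have hx := ltn_ord x.
case: (ltnP x.+1 k) => h.
  have -> : (ordS x : nat) = x.+1 by rewrite /= modn_small.
  rewrite (ltn_eqF h).
  case: eqP => [->|ne]; first by rewrite leqnn ltnn.
  have ne' : (c:nat) <> x by move=> q; apply: ne; apply: val_inj.
  case: (leqP x c) => h1; case: (ltnP x c) => h2 //=; lia.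
have e : x.+1 = k by lia.
have -> : (ordS x : nat) = 0%N by rewrite /= e modnn.
rewrite e eqxx /=.
case: eqP => [->|ne]; first by rewrite leqnn.
have ne' : (c:nat) <> x by move=> q; apply: ne; apply: val_inj.
case: (leqP x c) => h1 //=; lia.
Qed.

Theorem lemma2 (k n m : nat) (hk : (1 <= k)%N) (hn : (1 <= n)%N)
  (s : nat -> seq 'I_k)
  (hsize : forall i, (i <= m)%N -> size (s i) = n)
  (hstep : forall i, (i < m)%N -> s i.+1 = ICR (s i)) :
  eqmodK (fun c => psum (hist (s 0%N)) c - psum (hist (s m)) c)
         (fun c => \sum_(i < m) indic_first (s i) c).
Proof.
clear hsize hn.
elim: m hstep => [|m IH] hs.
  by exists 0 => c; rewrite big_ord0 !subrr.
have [z Hz] := IH (fun i hi => hs i (ltnW hi)).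
have [w Hw] := @step _ (s m).
exists (z + w) => c /=.
rewrite big_ord_recr /= -(Hz c) -(Hw c) hs //.
rewrite /= in Hz Hw *.
ring.
Qed.
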